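(* Let $s\ge 1$, let $1\le p\le\infty$, and let $d^p$ be the $\ell^p$-votewise distance built from any family of maps $d_C:L(C)\times L(C)\to[0,\infty)$ satisfying $d_C(\rho,\rho)=0$ and the triangle inequality. Then $\mathcal R(\mathrm{Unam}^s,d^p)$ is homogeneous: $\mathcal R(\mathrm{Unam}^s,d^p)(E)=\mathcal R(\mathrm{Unam}^s,d^p)(E')$ whenever $E\sim_H E'$.
   Context: Elections: $E=(C,V,\pi)$ with $C$ a finite subset of a countably infinite set $C^*$, $V$ a finite nonempty subset of a countably infinite set $V^*$, $\pi:V\to L(C)$ ($L(C)$ = strict linear orders of $C$, $L_s(C)$ = strict linear orders of $s$ distinct elements of $C$). Homogeneity relation $\sim_H$: same candidate set $C$ and $|\pi^{-1}(\rho)|/|V|=|\pi'^{-1}(\rho)|/|V'|$ for all $\rho\in L(C)$. $\mathrm{Unam}^s$ is the $s$-consensus whose domain consists of the elections with $|C|\ge s$ in which all voters rank the same $s$ candidates, in the same order, in their top $s$ positions, the consensus value being this common $s$-ranking; $\mathrm{Unam}^s_r$ is the set of elections with value $r$. Votewise $\ell^p$ distance: fix an enumeration of $V^*$; for $E=(C,V,\pi),E'=(C,V,\pi')$ with $V=\{v_1<\dots<v_n\}$, $d^p(E,E')=\|(d_C(\pi(v_1),\pi'(v_1)),\dots,d_C(\pi(v_n),\pi'(v_n)))\|_p$, and $d^p(E,E')=\infty$ if the candidate sets or voter sets differ. $d(E,A)=\inf_{F\in A}d(E,F)$ ($\infty$ if $A=\emptyset$); $\mathcal R(\mathcal K,d)(E)$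 is the set of $r\in L_s(C^* )$ with $d(E,\mathcal K_r)=\inf_{r'\in L_s(C^* )}d(E,\mathcal K_{r'})$. *)

(* Defs.v *)
From Stdlib Require Import Bool Reals Lra List Permutation Sorted Arith ClassicalEpsilon.
Import ListNotations.
Open Scope R_scope.

(** Candidates C* = nat, voters V* = nat - countably infinite; the fixed
    enumeration of V* is the usual order on nat. *)

(** Extended nonnegative reals [0, +oo] (values of distances), also used for p. *)
Inductive ER : Type := Fin (x : R) | PInf.

Definition ER_le (x y : ER) : Prop :=
  match x, y with
  | Fin a, Fin b => a <= b
  | _, PInf => True
  | PInf, Fin _ => False
  end.

Definition is_glb_ER (S : ER -> Prop) (x : ER) : Prop :=
  (forall y, S y -> ER_le x y) /\
  (forall z, (forall y, S y -> ER_le z y) -> ER_le z x).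

(** infimum (chosen glb; it exists for every set of nonnegative values,
    and the infimum of the empty set is +oo). *)
Definition ER_inf (S : ER -> Prop) : ER :=
  epsilon (inhabits PInf) (fun x => is_glb_ER S x).

(** A finite set of candidates/voters is represented canonically as a
    strictly increasing list. *)
Definition fin_set (C : list nat) : Prop := Sorted lt C.

(** strict linear order of C (ranking, best first) *)
Definition is_ranking (C : list nat) (rho : list nat) : Prop :=
  NoDup rho /\ Permutation rho C.

(** element of L_s over C-star: a strict linear order of s distinct candidates *)
Definition is_srank (s : nat) (r : list nat) : Prop :=
  NoDup r /\ length r = s.

Record election : Type := Election {
  cands : list nat;
  voters : list nat;
  prof : nat -> list nat }.

Definition valid_election (E : election) : Prop :=
  fin_set (cands E) /\ fin_set (voters E) /\ voters E <> [] /\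
  (forall v, In v (voters E) -> is_ranking (cands E) (prof E v)).

Definition list_eqb (a b : list nat) : bool :=
  if list_eq_dec Nat.eq_dec a b then true else false.

Definition count_votes (E : election) (rho : list nat) : nat :=
  length (filter (fun v => list_eqb (prof E v) rho) (voters E)).

Definition homog (E E' : election) : Prop :=
  cands E = cands E' /\
  forall rho, is_ranking (cands E) rho ->
    INR (count_votes E rho) / INR (length (voters E)) =
    INR (count_votes E' rho) / INR (length (voters E')).

Definition Unam (s : nat) (r : list nat) (E : election) : Prop :=
  valid_election E /\ (s <= length (cands E))%nat /\
  forall v, In v (voters E) -> firstn s (prof E v) = r.

(** power x^y for x >= 0 with 0^y = 0 *)
Definition rpow (x y : R) : R := if Rle_dec x 0 then 0 else Rpower x y.

Definition lp_norm (p : ER) (xs : list R) : R :=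
  match p with
  | Fin q => rpow (fold_right Rplus 0 (map (fun x => rpow (Rabs x) q) xs)) (/ q)
  | PInf => fold_right Rmax 0 (map Rabs xs)
  end.

(** family of distances d_C on L(C) *)
Definition dist_family := list nat -> list nat -> list nat -> R.

Definition is_pseudo_dist_family (d : dist_family) : Prop :=
  forall C, fin_set C ->
    (forall a b, is_ranking C a -> is_ranking C b -> 0 <= d C a b) /\
    (forall a, is_ranking C a -> d C a a = 0) /\
    (forall a b c, is_ranking C a -> is_ranking C b -> is_ranking C c ->
        d C a c <= d C a b + d C b c).

Definition votewise (d : dist_family) (p : ER) (E F : election) : ER :=
  if andb (list_eqb (cands E) (cands F)) (list_eqb (voters E) (voters F)) then
    Fin (lp_norm p (map (fun v => d (cands E) (prof E v) (prof F v)) (voters E)))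
  else PInf.

Definition dist_to (D : election -> election -> ER) (E : election)
    (A : election -> Prop) : ER :=
  ER_inf (fun x => exists F, A F /\ x = D E F).

(** R(Unam^s, d)(E) as a predicate on L_s over C-star *)
Definition R_Unam (s : nat) (D : election -> election -> ER) (E : election)
    (r : list nat) : Prop :=
  is_srank s r /\
  dist_to D E (Unam s r) =
  ER_inf (fun x => exists r', is_srank s r' /\ x = dist_to D E (Unam s r')).

(* Main.v *)
Require Import Defs.
From Stdlib Require Import Reals List Lra Lia Permutation ClassicalEpsilon Classical.
Import ListNotations.
Open Scope R_scope.

Lemma list_eqb_true a b : list_eqb a b = true <-> a = b.
Proof. unfold list_eqb; destruct (list_eq_dec Nat.eq_dec a b); split; congruence. Qed.

Lemma list_eqb_refl a : list_eqb a a = true.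
Proof. apply list_eqb_true; auto. Qed.

Lemma ER_le_antisym x y : ER_le x y -> ER_le y x -> x = y.
Proof. destruct x, y; simpl; intros; try contradiction; auto. f_equal; lra. Qed.

Lemma ER_inf_eq S g : is_glb_ER S g -> ER_inf S = g.
Proof.
  intros Hg. unfold ER_inf.
  pose proof (epsilon_spec (inhabits PInf) (fun x => is_glb_ER S x) (ex_intro _ g Hg)) as He.
  set (e := epsilon _ _) in *.
  destruct He as [He1 He2], Hg as [Hg1 Hg2].
  apply ER_le_antisym; [apply Hg2 | apply He2]; auto.
Qed.

Lemma glb_exists S : (forall x, S (Fin x) -> 0 <= x) -> exists g, is_glb_ER S g.
Proof.
  intros Hnn.
  destruct (classic (exists a, S (Fin a))) as [[a0 Ha0]|Hno].
  - assert (Hb : bound (fun y => S (Fin (- y)))).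
    { exists 0. intros y Hy. apply Hnn in Hy. lra. }
    assert (Hex : exists y, S (Fin (- y))).
    { exists (- a0). rewrite Ropp_involutive. auto. }
    destruct (completeness _ Hb Hex) as [l [Hl1 Hl2]].
    exists (Fin (- l)). split.
    + intros [a|] Hy; simpl; auto.
      assert (- a <= l). { apply Hl1. rewrite Ropp_involutive. auto. } lra.
    + intros [b|] Hz; simpl.
      * assert (l <= - b). { apply Hl2. intros y Hy. specialize (Hz _ Hy). simpl in Hz. lra. } lra.
      * specialize (Hz _ Ha0). simpl in Hz. auto.
  - exists PInf. split.
    + intros [a|] Hy; simpl; auto. apply Hno; eauto.
    + intros z _. destruct z; simpl; auto.
Qed.

Definition scale (c : R) (x : ER) : ER :=
  match x with Fin a => Fin (c * a) | PInf => PInf end.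

Lemma scale_le c x y : 0 < c -> ER_le (scale c x) (scale c y) <-> ER_le x y.
Proof.
  intros Hc. destruct x, y; simpl; try tauto. split; intros.
  - apply Rmult_le_reg_l with c; auto.
  - apply Rmult_le_compat_l; lra.
Qed.

Lemma scale_inv c x : 0 < c -> scale (/ c) (scale c x) = x.
Proof. intros Hc; destruct x; simpl; auto. f_equal. field. lra. Qed.

Lemma scale_inj c x y : 0 < c -> scale c x = scale c y -> x = y.
Proof. intros Hc H. rewrite <- (scale_inv c x), <- (scale_inv c y), H; auto. Qed.

Lemma glb_scale c S g : 0 < c -> is_glb_ER S g ->
  is_glb_ER (fun x => exists y, S y /\ x = scale c y) (scale c g).
Proof.
  intros Hc [H1 H2]. split.
  - intros x [y [Hy ->]]. apply scale_le; auto.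
  - intros z Hz. assert (Hz' : z = scale c (scale (/ c) z)).
    { destruct z; simpl; auto. f_equal. field. lra. }
    rewrite Hz'. apply scale_le; auto. apply H2. intros y Hy.
    apply (scale_le c); auto. rewrite <- Hz'. apply Hz. eauto.
Qed.

Lemma rpow_nonneg x y : 0 <= rpow x y.
Proof. unfold rpow, Rpower. destruct (Rle_dec x 0). lra. left; apply exp_pos. Qed.

Lemma rpow_mono x y e : 0 < e -> x <= y -> rpow x e <= rpow y e.
Proof.
  intros He Hxy. unfold rpow. destruct (Rle_dec x 0).
  - destruct (Rle_dec y 0). lra. left; unfold Rpower; apply exp_pos.
  - destruct (Rle_dec y 0). lra. apply Rle_Rpower_l; lra.
Qed.

Lemma rpow_mult k x e : 0 < k -> 0 <= x -> rpow (k * x) e = rpow k e * rpow x e.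
Proof.
  intros Hk Hx. unfold rpow.
  destruct (Rle_dec k 0); [lra|].
  destruct (Rle_dec x 0).
  - assert (x = 0) by lra. subst. rewrite Rmult_0_r.
    destruct (Rle_dec 0 0); [ring|lra].
  - destruct (Rle_dec (k*x) 0).
    + assert (0 < k * x) by (apply Rmult_lt_0_compat; lra). lra.
    + rewrite Rpower_mult_distr; auto; lra.
Qed.

Definition sumR (l : list R) := fold_right Rplus 0 l.

Lemma sumR_map_nonneg {A} (f : A -> R) l : (forall x, In x l -> 0 <= f x) -> 0 <= sumR (map f l).
Proof. induction l; simpl; intros H. lra. pose proof (H a (or_introl eq_refl)).
  assert (0 <= sumR (map f l)) by (apply IHl; auto). lra. Qed.

Lemma sumR_mono {A} (f g : A -> R) l : (forall x, In x l -> f x <= g x) ->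
  sumR (map f l) <= sumR (map g l).
Proof. induction l; simpl; intros H. lra. pose proof (H a (or_introl eq_refl)).
  assert (sumR (map f l) <= sumR (map g l)) by (apply IHl; auto). lra. Qed.

Lemma sumR_plus {A} (f g : A -> R) l :
  sumR (map (fun x => f x + g x) l) = sumR (map f l) + sumR (map g l).
Proof. induction l; simpl. lra. unfold sumR in *. simpl. rewrite IHl. ring. Qed.

Lemma sumR_scale {A} (f : A -> R) k l :
  sumR (map (fun x => k * f x) l) = k * sumR (map f l).
Proof. induction l; simpl. lra. unfold sumR in *. simpl. rewrite IHl. ring. Qed.

Lemma sumR_ext {A} (f g : A -> R) l : (forall x, In x l -> f x = g x) ->
  sumR (map f l) = sumR (map g l).
Proof. induction l; simpl; intros H; auto. unfold sumR in *; simpl.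
  rewrite H, IHl; auto. Qed.

Definition ind (x y : list nat) : R := if list_eqb x y then 1 else 0.

Lemma sumR_delta_notin (H : list nat -> R) x L : ~ In x L ->
  sumR (map (fun r => ind x r * H r) L) = 0.
Proof.
  induction L; simpl; intros Hn; auto. unfold sumR in *; simpl.
  rewrite IHL by tauto. unfold ind. destruct (list_eqb x a) eqn:E.
  - apply list_eqb_true in E. subst. tauto.
  - ring.
Qed.

Lemma sumR_delta (H : list nat -> R) x L : NoDup L -> In x L ->
  sumR (map (fun r => ind x r * H r) L) = H x.
Proof.
  induction L; simpl; intros Hd Hi. contradiction. inversion Hd; subst.
  unfold sumR in *; simpl. destruct Hi as [<-|Hi].
  - rewrite sumR_delta_notin by auto. unfold ind; rewrite list_eqb_refl. ring.
  - rewrite IHL by auto. unfold ind. destruct (list_eqb x a) eqn:E.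
    + apply list_eqb_true in E. subst. contradiction.
    + ring.
Qed.

Definition cnt (f : nat -> list nat) (V : list nat) (r : list nat) : nat :=
  length (filter (fun v => list_eqb (f v) r) V).

Lemma cnt_cons f v V r : INR (cnt f (v :: V) r) = ind (f v) r + INR (cnt f V r).
Proof. unfold cnt, ind; simpl. destruct (list_eqb (f v) r); simpl length; try rewrite S_INR; ring. Qed.

Lemma sum_by_counts (H : list nat -> R) f V L : NoDup L ->
  (forall v, In v V -> In (f v) L) ->
  sumR (map (fun v => H (f v)) V) = sumR (map (fun r => INR (cnt f V r) * H r) L).
Proof.
  intros Hd. induction V as [|v V IH]; simpl; intros Hin.
  - symmetry. rewrite (sumR_ext _ (fun r => 0 * 0) L).
    + rewrite sumR_scale. ring.
    + intros; simpl; unfold cnt; simpl. lra.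
  - unfold sumR at 1; simpl. fold (sumR (map (fun v => H (f v)) V)).
    rewrite IH by auto.
    rewrite (sumR_ext (fun r => INR (cnt f (v :: V) r) * H r) (fun r => ind (f v) r * H r + INR (cnt f V r) * H r) L).
    + rewrite sumR_plus, sumR_delta; auto.
    + intros r _. rewrite cnt_cons. ring.
Qed.

Lemma fold_max_ub l x : In x l -> x <= fold_right Rmax 0 l.
Proof. induction l; simpl. tauto. intros [->|H]. apply Rmax_l.
  eapply Rle_trans; [apply IHl; auto| apply Rmax_r]. Qed.

Lemma fold_max_le l M : 0 <= M -> (forall x, In x l -> x <= M) -> fold_right Rmax 0 l <= M.
Proof. induction l; simpl; intros H0 H; auto. apply Rmax_lub; auto. Qed.

Lemma fold_max_nonneg l : 0 <= fold_right Rmax 0 l.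
Proof. destruct l; simpl. lra. eapply Rle_trans; [|apply Rmax_r].
  induction l; simpl. lra. eapply Rle_trans; [|apply Rmax_r]. auto. Qed.

Lemma lp_norm_nonneg p xs : 0 <= lp_norm p xs.
Proof. destruct p; simpl. apply rpow_nonneg. apply fold_max_nonneg. Qed.

Lemma lp_norm_mono p (a b : nat -> R) V : ER_le (Fin 1) p ->
  (forall v, In v V -> 0 <= a v <= b v) ->
  lp_norm p (map a V) <= lp_norm p (map b V).
Proof.
  intros Hp H. destruct p as [q|]; simpl in *.
  - apply rpow_mono. apply Rinv_0_lt_compat; lra.
    rewrite !map_map. apply sumR_mono. intros v Hv. apply rpow_mono. lra.
    specialize (H v Hv). rewrite !Rabs_right; lra.
  - apply fold_max_le. apply fold_max_nonneg.
    intros x Hx. rewrite map_map in Hx. apply in_map_iff in Hx. destruct Hx as [v [<- Hv]].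
    specialize (H v Hv). eapply Rle_trans; [|apply fold_max_ub].
    2:{ rewrite map_map. apply in_map_iff. exists v; eauto. }
    rewrite !Rabs_right; lra.
Qed.

Lemma homog_sym E E' : homog E E' -> homog E' E.
Proof. intros [Hc Hr]. split; auto. intros rho H. rewrite <- Hc in H. symmetry; auto. Qed.

Lemma len_pos E : valid_election E -> 0 < INR (length (voters E)).
Proof. intros (_&_&Hn&_). apply lt_0_INR. destruct (voters E); simpl; [congruence|lia]. Qed.

Lemma exists_match E E' v : valid_election E -> valid_election E' -> homog E E' ->
  In v (voters E) -> exists v', In v' (voters E') /\ prof E' v' = prof E v.
Proof.
  intros hE hE' [Hc Hr] Hv.
  assert (Hrk : is_ranking (cands E) (prof E v)) by (destruct hE as (_&_&_&H); auto).
  specialize (Hr _ Hrk).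
  assert (H1 : (1 <= count_votes E (prof E v))%nat).
  { unfold count_votes. destruct (filter _ _) eqn:Ef; simpl; [|lia].
    assert (In v (filter (fun v0 => list_eqb (prof E v0) (prof E v)) (voters E))).
    { apply filter_In; split; auto. apply list_eqb_refl. }
    rewrite Ef in H; contradiction. }
  destruct (filter (fun v0 => list_eqb (prof E' v0) (prof E v)) (voters E')) as [|w l] eqn:Ef.
  - exfalso. unfold count_votes at 2 in Hr. rewrite Ef in Hr. simpl in Hr.
    pose proof (len_pos E hE) as P1. pose proof (len_pos E' hE') as P2.
    apply le_INR in H1. simpl in H1.
    assert (H2 : 0 < INR (count_votes E (prof E v)) / INR (length (voters E))).
    { apply Rdiv_lt_0_compat; lra. }
    rewrite Hr in H2. unfold Rdiv in H2. rewrite Rmult_0_l in H2. lra.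
  - assert (In w (filter (fun v0 => list_eqb (prof E' v0) (prof E v)) (voters E'))) by (rewrite Ef; left; auto).
    apply filter_In in H. destruct H as [Hw He]. apply list_eqb_true in He. eauto.
Qed.

Lemma norm_rel p E E' : ER_le (Fin 1) p -> valid_election E -> valid_election E' -> homog E E' ->
  exists c, 0 < c /\ forall h : list nat -> R,
    lp_norm p (map (fun v => h (prof E' v)) (voters E')) =
    c * lp_norm p (map (fun v => h (prof E v)) (voters E)).
Proof.
  intros Hp hE hE' HH. destruct p as [q|].
  - simpl in Hp.
    set (k := INR (length (voters E')) / INR (length (voters E))).
    pose proof (len_pos E hE) as P1. pose proof (len_pos E' hE') as P2.
    assert (Hk : 0 < k) by (apply Rdiv_lt_0_compat; lra).
    exists (rpow k (/ q)). split.
    { unfold rpow. destruct (Rle_dec k 0). lra. unfold Rpower; apply exp_pos. }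
    intros h. simpl. rewrite !map_map.
    set (H := fun r => rpow (Rabs (h r)) q).
    set (L := nodup (list_eq_dec Nat.eq_dec) (map (prof E) (voters E) ++ map (prof E') (voters E'))).
    assert (HL : NoDup L) by apply NoDup_nodup.
    change (fold_right Rplus 0 (map (fun x => rpow (Rabs (h (prof E' x))) q) (voters E')))
      with (sumR (map (fun x => H (prof E' x)) (voters E'))).
    change (fold_right Rplus 0 (map (fun x => rpow (Rabs (h (prof E x))) q) (voters E)))
      with (sumR (map (fun x => H (prof E x)) (voters E))).
    rewrite (sum_by_counts H (prof E') (voters E') L HL).
    2:{ intros v Hv. apply nodup_In. apply in_or_app; right. apply in_map; auto. }
    rewrite (sum_by_counts H (prof E) (voters E) L HL).
    2:{ intros v Hv. apply nodup_In. apply in_or_app; left. apply in_map; auto. }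
    rewrite (sumR_ext (fun r => INR (cnt (prof E') (voters E') r) * H r)
                      (fun r => k * (INR (cnt (prof E) (voters E) r) * H r)) L).
    + rewrite sumR_scale. apply rpow_mult; auto.
      apply sumR_map_nonneg. intros r _. apply Rmult_le_pos; [apply pos_INR|apply rpow_nonneg].
    + intros r Hr. apply nodup_In in Hr.
      assert (Hrk : is_ranking (cands E) r).
      { apply in_app_or in Hr. destruct hE as (_&_&_&hE), hE' as (_&_&_&hE').
        destruct Hr as [Hr|Hr]; apply in_map_iff in Hr; destruct Hr as [v [<- Hv]]; auto.
        destruct HH as [Hc _]. rewrite Hc; auto. }
      destruct HH as [_ Hr2]. specialize (Hr2 r Hrk). unfold count_votes in Hr2.
      fold (cnt (prof E) (voters E) r) in Hr2. fold (cnt (prof E') (voters E') r) in Hr2.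
      assert (H2 : INR (cnt (prof E') (voters E') r) = k * INR (cnt (prof E) (voters E) r)).
      { unfold k. field_simplify_eq in Hr2; try lra. field_simplify_eq; lra. }
      rewrite H2; ring.
  - exists 1. split. lra. intros h. rewrite Rmult_1_l. simpl. rewrite !map_map.
    assert (Hgen : forall E E', valid_election E -> valid_election E' -> homog E E' ->
      fold_right Rmax 0 (map (fun v => Rabs (h (prof E v))) (voters E)) <=
      fold_right Rmax 0 (map (fun v => Rabs (h (prof E' v))) (voters E'))).
    { intros E1 E2 h1 h2 hh. apply fold_max_le. apply fold_max_nonneg.
      intros x Hx. apply in_map_iff in Hx. destruct Hx as [v [<- Hv]].
      destruct (exists_match E1 E2 v h1 h2 hh Hv) as [v' [Hv' He]].
      rewrite <- He. apply fold_max_ub. apply in_map_iff. eauto. }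
    apply Rle_antisym; apply Hgen; auto. apply homog_sym; auto.
Qed.

Definition Pgood s C r σ := is_ranking C σ /\ firstn s σ = r.
Definition feas s C r := (s <= length C)%nat /\ exists σ, Pgood s C r σ.
Definition gsel (d : dist_family) s C r ρ :=
  epsilon (inhabits nil) (fun σ => Pgood s C r σ /\
     forall σ', Pgood s C r σ' -> d C ρ σ <= d C ρ σ').

Fixpoint words (n : nat) (C : list nat) : list (list nat) :=
  match n with
  | O => [[]]
  | S n => flat_map (fun x => map (cons x) (words n C)) C
  end.

Lemma words_in C σ : (forall x, In x σ -> In x C) -> In σ (words (length σ) C).
Proof.
  induction σ as [|a σ IH]; simpl; intros H; auto.
  apply in_flat_map. exists a. split; auto. apply in_map. auto.
Qed.

Lemma min_list (W : list (list nat)) (P : list nat -> Prop) (f : list nat -> R) :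
  (exists w, In w W /\ P w) -> exists w0, P w0 /\ forall w, In w W -> P w -> f w0 <= f w.
Proof.
  induction W as [|a W IH]; intros [w [Hw Pw]]; [contradiction|].
  destruct (classic (exists w, In w W /\ P w)) as [Hex|Hno].
  - destruct (IH Hex) as [w0 [P0 H0]].
    destruct (classic (P a /\ f a < f w0)) as [[Pa Hlt]|Hn].
    + exists a. split; auto. intros w1 [Heq|Hw1] Pw1. subst w1; lra. specialize (H0 w1 Hw1 Pw1). lra.
    + exists w0. split; auto. intros w1 [Heq|Hw1] Pw1; [subst w1|auto].
      destruct (Rle_dec (f w0) (f a)); auto. exfalso; apply Hn; split; auto; lra.
  - destruct Hw as [<-|Hw]; [|exfalso; apply Hno; eauto].
    exists a. split; auto. intros w1 [Heq|Hw1] Pw1. subst w1; lra. exfalso; apply Hno; eauto.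
Qed.

Lemma gsel_spec d s C r ρ : feas s C r ->
  Pgood s C r (gsel d s C r ρ) /\
  forall σ', Pgood s C r σ' -> d C ρ (gsel d s C r ρ) <= d C ρ σ'.
Proof.
  intros [_ [σ Hσ]]. unfold gsel. apply epsilon_spec.
  destruct (min_list (words (length C) C) (Pgood s C r) (fun σ => d C ρ σ)) as [w0 [P0 H0]].
  - exists σ. split; auto. destruct Hσ as [[_ Hp] _].
    rewrite <- (Permutation_length Hp). apply words_in. intros x Hx.
    eapply Permutation_in; eauto.
  - exists w0. split; auto. intros σ' Hσ'. apply H0; auto.
    destruct Hσ' as [[_ Hp] _].
    rewrite <- (Permutation_length Hp). apply words_in. intros x Hx.
    eapply Permutation_in; eauto.
Qed.

Lemma dist_feas d s p r E : is_pseudo_dist_family d -> ER_le (Fin 1) p ->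
  valid_election E -> feas s (cands E) r ->
  dist_to (votewise d p) E (Unam s r) =
  Fin (lp_norm p (map (fun v => d (cands E) (prof E v) (gsel d s (cands E) r (prof E v))) (voters E))).
Proof.
  intros hd hp hE hf. unfold dist_to. apply ER_inf_eq.
  pose proof hE as (hC & hV & hN & hR).
  destruct (hd _ hC) as (hnn & _ & _).
  split.
  - intros y [F [HU ->]]. unfold votewise.
    destruct (list_eqb (cands E) (cands F)) eqn:E1; simpl; auto.
    destruct (list_eqb (voters E) (voters F)) eqn:E2; simpl; auto.
    apply list_eqb_true in E1, E2.
    apply lp_norm_mono; auto. intros v Hv.
    destruct (gsel_spec d s (cands E) r (prof E v) hf) as [[Hg1 _] Hg2]. split.
    + apply hnn; auto.
    + apply Hg2. destruct HU as ((_&_&_&HF) & _ & HF2).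
      rewrite E2 in Hv. split; auto. rewrite E1; auto.
  - intros z Hz.
    set (F := Election (cands E) (voters E) (fun v => gsel d s (cands E) r (prof E v))).
    assert (HF : Unam s r F).
    { split; [|split].
      - split; [exact hC|split; [exact hV|split; [exact hN|]]]. simpl. intros v Hv.
        apply (gsel_spec d s (cands E) r (prof E v) hf).
      - simpl. apply hf.
      - simpl. intros v Hv. apply (gsel_spec d s (cands E) r (prof E v) hf). }
    specialize (Hz _ (ex_intro _ F (conj HF eq_refl))).
    unfold votewise in Hz. simpl in Hz. rewrite !list_eqb_refl in Hz. simpl in Hz. exact Hz.
Qed.

Lemma dist_infeas d s p r E : valid_election E -> ~ feas s (cands E) r ->
  dist_to (votewise d p) E (Unam s r) = PInf.
Proof.
  intros hE hf. unfold dist_to. apply ER_inf_eq. split.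
  - intros y [F [HU ->]]. unfold votewise.
    destruct (list_eqb (cands E) (cands F)) eqn:E1; simpl; auto.
    destruct (list_eqb (voters E) (voters F)) eqn:E2; simpl; auto.
    apply list_eqb_true in E1, E2. exfalso; apply hf.
    destruct HU as ((_&_&HN&HF) & Hs & HF2).
    destruct (voters F) as [|v V] eqn:EV; [congruence|].
    rewrite E1. split; auto. exists (prof F v). split.
    + apply HF. left; auto.
    + apply HF2. left; auto.
  - intros z _. destruct z; simpl; auto.
Qed.

Lemma glb_ext S1 S2 g : (forall x, S1 x <-> S2 x) -> is_glb_ER S1 g -> is_glb_ER S2 g.
Proof. intros He [H1 H2]. split; intros; [apply H1, He | apply H2]; auto. intros; apply H, He; auto. Qed.

Theorem corollary6p12 (s : nat) (p : ER) (d : dist_family)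
  (hs : (1 <= s)%nat) (hp : ER_le (Fin 1) p)
  (hd : is_pseudo_dist_family d)
  (E E' : election) (hE : valid_election E) (hE' : valid_election E')
  (hH : homog E E') :
  forall r, R_Unam s (votewise d p) E r <-> R_Unam s (votewise d p) E' r.
Proof.
  destruct (norm_rel p E E' hp hE hE' hH) as [c [Hc Hrel]].
  set (val := fun F r => dist_to (votewise d p) F (Unam s r)).
  assert (Hval : forall r, val E' r = scale c (val E r)).
  { intros r. unfold val. destruct (classic (feas s (cands E) r)) as [hf|hf].
    - assert (hf' : feas s (cands E') r) by (destruct hH as [Hc0 _]; rewrite <- Hc0; auto).
      rewrite (dist_feas d s p r E hd hp hE hf), (dist_feas d s p r E' hd hp hE' hf').
      destruct hH as [Hc' _]. rewrite Hc'. simpl. f_equal.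
      apply (Hrel (fun ρ => d (cands E') ρ (gsel d s (cands E') r ρ))).
    - assert (hf' : ~ feas s (cands E') r) by (destruct hH as [Hc0 _]; rewrite <- Hc0; auto).
      rewrite (dist_infeas d s p r E hE hf), (dist_infeas d s p r E' hE' hf'). auto. }
  set (S := fun x => exists r', is_srank s r' /\ x = val E r').
  destruct (glb_exists S) as [g Hg].
  { intros x [r' [_ Hx]]. unfold val in Hx.
    destruct (classic (feas s (cands E) r')) as [hf|hf].
    - rewrite (dist_feas d s p r' E hd hp hE hf) in Hx. injection Hx as ->.
      apply lp_norm_nonneg.
    - rewrite (dist_infeas d s p r' E hE hf) in Hx. discriminate. }
  assert (HS : ER_inf S = g) by (apply ER_inf_eq; auto).
  assert (HS' : ER_inf (fun x => exists r', is_srank s r' /\ x = val E' r') = scale c g).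
  { apply ER_inf_eq. eapply glb_ext; [|apply (glb_scale c S g Hc Hg)].
    intros x. split.
    - intros [y [[r' [Hr' ->]] ->]]. exists r'. split; auto.
    - intros [r' [Hr' ->]]. exists (val E r'). split; auto. exists r'; auto. }
  intros r. unfold R_Unam. fold (val E r) (val E' r).
  change (fun x => exists r', is_srank s r' /\ x = dist_to (votewise d p) E (Unam s r')) with S.
  change (fun x => exists r', is_srank s r' /\ x = dist_to (votewise d p) E' (Unam s r'))
    with (fun x => exists r', is_srank s r' /\ x = val E' r').
  rewrite HS, HS', Hval. split; intros [H1 H2]; split; auto.
  - rewrite H2; auto.
  - eapply scale_inj; eauto.
Qed.
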